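(* Let $p$ be a prime. If $X\subset\mathbb{R}^{k_1}$ and $Y\subset\mathbb{R}^{k_2}$ are Euclidean sub-$p$-toral, then $X\times Y\subset\mathbb{R}^{k_1+k_2}$ is Euclidean sub-$p$-toral.
   Context: A $p$-torus is a group isomorphic to $(\mathbb{Z}_p)^\alpha$ for some $\alpha\ge1$. A set $X\subset\mathbb{R}^k$ is Euclidean sub-$p$-toral if there exist $n\ge k$, a $p$-torus $G$ and an action of $G$ on $\mathbb{R}^n$ by isometries such that $X$ (viewed in $\mathbb{R}^n$ via the standard inclusion $\mathbb{R}^k\subset\mathbb{R}^n$) is contained in a single $G$-orbit. *)

(* Defs.v *)
From HB Require Import structures.
From mathcomp Require Import all_boot all_order all_algebra.
From mathcomp Require Import reals.
Set Implicit Arguments. Unset Strict Implicit. Unset Printing Implicit Defensive.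
Import Order.TTheory GRing.Theory Num.Theory.
Local Open Scope ring_scope.

Definition edist (R : realType) (n : nat) (u v : 'rV[R]_n) : R :=
  Num.sqrt (\sum_(i < n) ((u - v) 0 i) ^+ 2).

Definition isometry (R : realType) (n : nat) (f : 'rV[R]_n -> 'rV[R]_n) : Prop :=
  forall u v, edist (f u) (f v) = edist u v.

(* An action by isometries of the p-torus (Z_p)^alpha (additive group
   'rV['Z_p]_alpha) on R^n. *)
Definition isometric_action (R : realType) (p alpha n : nat)
  (act : 'rV['Z_p]_alpha -> 'rV[R]_n -> 'rV[R]_n) : Prop :=
  [/\ forall x, act 0 x = x,
      forall g h x, act (g + h) x = act g (act h x)
    & forall g, isometry (act g)].

Definition std_incl (R : realType) (k n : nat) (x : 'rV[R]_k) : 'rV[R]_n :=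
  \row_(i < n) (match ltnP i k with
                 | LtnNotGeq hik => x 0 (Ordinal hik)
                 | _ => 0 end).

Definition euclidean_sub_ptoral (R : realType) (p k : nat)
  (X : 'rV[R]_k -> Prop) : Prop :=
  exists (n alpha : nat) (act : 'rV['Z_p]_alpha -> 'rV[R]_n -> 'rV[R]_n),
    [/\ (k <= n)%N, (1 <= alpha)%N, isometric_action act
      & exists x0 : 'rV[R]_n, forall x, X x -> exists g, std_incl n x = act g x0].

Definition setXrow (R : realType) (k1 k2 : nat)
  (X : 'rV[R]_k1 -> Prop) (Y : 'rV[R]_k2 -> Prop) : 'rV[R]_(k1 + k2) -> Prop :=
  fun z => exists x y, [/\ X x, Y y & z = row_mx x y].

(* Main.v *)
Require Import Defs.
From mathcomp Require Import all_boot all_order all_algebra all_fingroup.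
From mathcomp Require Import reals.
From mathcomp Require Import zify.
Set Implicit Arguments. Unset Strict Implicit. Unset Printing Implicit Defensive.
Import Order.TTheory GRing.Theory Num.Theory.
Local Open Scope ring_scope.

Definition sq (R : realType) n (u v : 'rV[R]_n) : R := \sum_(i < n) ((u - v) 0 i) ^+ 2.

Lemma sq_ge0 (R : realType) n (u v : 'rV[R]_n) : 0 <= sq u v.
Proof. by apply: sumr_ge0 => i _; rewrite sqr_ge0. Qed.

Lemma iso_sq (R : realType) n (f : 'rV[R]_n -> 'rV[R]_n) :
  Defs.isometry f <-> forall u v, sq (f u) (f v) = sq u v.
Proof.
split=> H u v.
  have := H u v; rewrite /edist => E.
  by rewrite -[sq (f u) _]sqr_sqrtr ?sq_ge0 // -[sq u v]sqr_sqrtr ?sq_ge0 // /sq E.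
by rewrite /edist -!/(sq _ _) H.
Qed.

Lemma sq_row_mx (R : realType) n1 n2 (a c : 'rV[R]_n1) (b d : 'rV[R]_n2) :
  sq (row_mx a b) (row_mx c d) = sq a c + sq b d.
Proof.
rewrite /sq big_split_ord /= opp_row_mx add_row_mx.
by congr (_ + _); apply: eq_bigr => i _; rewrite ?row_mxEl ?row_mxEr.
Qed.

Definition pmx (R : realType) n (s : {perm 'I_n}) (z : 'rV[R]_n) : 'rV[R]_n :=
  \row_i z 0 (s i).

Lemma sq_pmx (R : realType) n (s : {perm 'I_n}) u v :
  sq (pmx s u) (pmx s v) = sq u v :> R.
Proof.
rewrite /sq [RHS](reindex_inj (@perm_inj _ s)) /=.
by apply: eq_bigr => i _; rewrite !mxE.
Qed.

Lemma pmxK (R : realType) n (s : {perm 'I_n}) (z : 'rV[R]_n) :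
  pmx (s^-1)%g (pmx s z) = z.
Proof.
apply/rowP => i; rewrite !mxE permKV; congr (z _ _); apply/val_inj; rewrite /= ?ord1.
Qed.

Lemma pmxKV (R : realType) n (s : {perm 'I_n}) (z : 'rV[R]_n) :
  pmx s (pmx (s^-1)%g z) = z.
Proof.
apply/rowP => i; rewrite !mxE permK; congr (z _ _); apply/val_inj; rewrite /= ?ord1.
Qed.

Lemma std_inclL (R : realType) k n (x : 'rV[R]_k) (i : 'I_n) (h : (i < k)%N) :
  std_incl n x 0 i = x 0 (Ordinal h).
Proof.
rewrite /std_incl mxE; destruct (ltnP i k) as [h'|h']; first by congr (x 0 _); apply/val_inj.
by exfalso; move: h; rewrite ltnNge h'.
Qed.

Lemma std_inclR (R : realType) k n (x : 'rV[R]_k) (i : 'I_n) (h : (k <= i)%N) :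
  std_incl n x 0 i = 0.
Proof.
rewrite /std_incl mxE; destruct (ltnP i k) as [h'|h'] => //.
Qed.

Section Perm.
Variables (n1 n2 k1 k2 : nat) (h1 : (k1 <= n1)%N) (h2 : (k2 <= n2)%N).

Definition fn (i : nat) : nat :=
  if (i < n1)%N then (if (i < k1)%N then i else k1 + k2 + (i - k1))%N
  else (if (i - n1 < k2)%N then k1 + (i - n1) else i)%N.

Lemma fn_lt (i : 'I_(n1 + n2)) : (fn i < n1 + n2)%N.
Proof.
have := ltn_ord i; rewrite /fn.
case: ifP => /= a; case: ifP => b; lia.
Qed.

Definition fo (i : 'I_(n1 + n2)) : 'I_(n1 + n2) := Ordinal (fn_lt i).

Lemma fo_inj : injective fo.
Proof.
move=> i j /(congr1 val) /=; rewrite /fn => E; apply/val_inj => /=.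
move: E; case: ifP => a; case: ifP => b; case: ifP => c; case: ifP => d; lia.
Qed.

Definition sperm : {perm 'I_(n1 + n2)} := perm fo_inj.

Lemma sperm_std (R : realType) (x : 'rV[R]_k1) (y : 'rV[R]_k2) :
  pmx sperm (std_incl (n1 + n2) (row_mx x y)) =
  row_mx (std_incl n1 x) (std_incl n2 y).
Proof.
apply/rowP => i; rewrite mxE permE.
case: (splitP i) => j Ej.
- rewrite (_ : i = lshift n2 j); last by apply/val_inj.
  rewrite row_mxEl.
  have Ef : (fo (lshift n2 j) : nat) = fn j by [].
  case: (ltnP j k1) => hj.
  + have hf : (fo (lshift n2 j) < k1 + k2)%N by rewrite Ef /fn ltn_ord hj; lia.
    rewrite (std_inclL _ hf) (std_inclL _ hj).
    rewrite (_ : Ordinal hf = lshift k2 (Ordinal hj)); first by rewrite row_mxEl.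
    by apply/val_inj; rewrite /= /fn ltn_ord hj.
  + rewrite (std_inclR _ hj) std_inclR // Ef /fn ltn_ord ltnNge hj /=; lia.
- rewrite (_ : i = rshift n1 j); last by apply/val_inj.
  rewrite row_mxEr.
  have Ef : (fo (rshift n1 j) : nat) = fn (n1 + j) by [].
  have e1 : (n1 + j < n1)%N = false by lia.
  have e2 : (n1 + j - n1 = j)%N by lia.
  case: (ltnP j k2) => hj.
  + have hf : (fo (rshift n1 j) < k1 + k2)%N by rewrite Ef /fn e1 e2 hj; lia.
    rewrite (std_inclL _ hf) (std_inclL _ hj).
    rewrite (_ : Ordinal hf = rshift k1 (Ordinal hj)); first by rewrite row_mxEr.
    by apply/val_inj; rewrite /= /fn e1 e2 hj.
  + rewrite (std_inclR _ hj) std_inclR // Ef /fn e1 e2 ltnNge hj /=; lia.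
Qed.
End Perm.

Theorem lemma2 (R : realType) (p k1 k2 : nat) (hp : prime p)
  (X : 'rV[R]_k1 -> Prop) (Y : 'rV[R]_k2 -> Prop) :
  euclidean_sub_ptoral p X -> euclidean_sub_ptoral p Y ->
  euclidean_sub_ptoral p (setXrow X Y).
Proof.
move=> [n1 [a1 [act1 [hk1 ha1 [A10 A1D A1I] [x01 Hx]]]]].
move=> [n2 [a2 [act2 [hk2 ha2 [A20 A2D A2I] [x02 Hy]]]]].
have {}A1I g u v : sq (act1 g u) (act1 g v) = sq u v := proj1 (iso_sq _) (A1I g) u v.
have {}A2I g u v : sq (act2 g u) (act2 g v) = sq u v := proj1 (iso_sq _) (A2I g) u v.
pose s := sperm hk1 hk2.
pose act' (g : 'rV['Z_p]_(a1 + a2)) (z : 'rV[R]_(n1 + n2)) :=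
  row_mx (act1 (lsubmx g) (lsubmx z)) (act2 (rsubmx g) (rsubmx z)).
exists (n1 + n2)%N, (a1 + a2)%N, (fun g z => pmx (s^-1)%g (act' g (pmx s z))).
split.
- lia.
- lia.
- split.
  + move=> z; rewrite /act' !linear0 A10 A20 hsubmxK; exact: pmxK.
  + move=> g h z; rewrite pmxKV /act' !linearD /= A1D A2D row_mxKl row_mxKr.
    by [].
  + move=> g; apply/(proj2 (iso_sq _)) => u v; rewrite sq_pmx /act' sq_row_mx A1I A2I.
    by rewrite -sq_row_mx !hsubmxK sq_pmx.
- exists (pmx (s^-1)%g (row_mx x01 x02)) => z [x [y [Xx Yy ->]]].
  have [g1 E1] := Hx x Xx; have [g2 E2] := Hy y Yy.
  exists (row_mx g1 g2).
  rewrite pmxKV /act' !row_mxKl !row_mxKr -E1 -E2.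
  by rewrite -(sperm_std hk1 hk2) pmxK.
Qed.
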